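(* Let $p$ be a prime number and let $H=p\mathbb Z_{p^2}\times p\mathbb Z_{p^2}=\{(pj,pk):j,k\in\mathbb Z\}\subseteq\mathbb Z_{p^2}\times\mathbb Z_{p^2}$ (the unique non-cyclic Lagrangian of $\mathbb Z_{p^2}\times\mathbb Z_{p^2}$). If $A\subseteq\mathbb Z_{p^2}\times\mathbb Z_{p^2}$ complements $H$, i.e. $\{A+h\}_{h\in H}$ is a partition of $\mathbb Z_{p^2}\times\mathbb Z_{p^2}$, then $$\Delta A\cap Z(\widehat{\mathbf 1}_A^{sym})=\emptyset.$$
   Context: Here $n=p^2$. For $x=(x_1,x_2),y=(y_1,y_2)\in\mathbb Z_n\times\mathbb Z_n$ the symplectic form is $\langle x,y\rangle_s=x_1y_2-x_2y_1$. For $A\subseteq\mathbb Z_n\times\mathbb Z_n$, $\widehat{\mathbf 1}_A^{sym}(\xi)=\sum_{a\in A}e^{\frac{2\pi i}{n}\langle a,\xi\rangle_s}$ and $Z(\widehat{\mathbf 1}_A^{sym})=\{\xi:\widehat{\mathbf 1}_A^{sym}(\xi)=0\}$. The difference set is $\Delta A=\{a-a':a,a'\in A,\ a\neq a'\}$. A Lagrangian is a subset $H$ with $H=H^{\perp_s}$, where $H^{\perp_s}=\{g:\langle g,h\rangle_s=0\ \forall h\in H\}$; Lagrangians are exactly the subgroups of order $n$, and the only non-cyclic one in $\mathbb Z_{p^2}\times\mathbb Z_{p^2}$ is $p\mathbb Z_{p^2}\times p\mathbb Z_{p^2}$. *)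

(* Defs.v *)
From HB Require Import structures.
From mathcomp Require Import all_boot all_order all_algebra.
From mathcomp Require Import all_classical all_reals all_analysis.
From mathcomp Require Import complex.
Set Implicit Arguments. Unset Strict Implicit. Unset Printing Implicit Defensive.
Import Order.TTheory GRing.Theory Num.Theory.
Local Open Scope ring_scope.

(* The group Z_{p^2} x Z_{p^2}.  For p prime, p^2 >= 4, so 'Z_(p^2) is
   exactly Z/p^2Z. *)
Notation ZZ p := ('Z_(p ^ 2) * 'Z_(p ^ 2))%type.

Definition symp (p : nat) (x y : ZZ p) : 'Z_(p ^ 2) := x.1 * y.2 - x.2 * y.1.

Definition expi (R : realType) (n k : nat) : R[i] :=
  Complex (cos (2 * pi * k%:R / n%:R)) (sin (2 * pi * k%:R / n%:R)).

Definition fourier_sym (R : realType) (p : nat) (A : {set ZZ p}) (xi : ZZ p)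
  : R[i] := \sum_(a in A) expi R (p ^ 2) (nat_of_ord (symp a xi)).

Definition zero_set (p : nat) (T : nmodType) (f : ZZ p -> T) : {set ZZ p} :=
  [set xi | f xi == 0].

Definition diff_set (p : nat) (A : {set ZZ p}) : {set ZZ p} :=
  [set (a : ZZ p) - a' | a : ZZ p in A, a' : ZZ p in A & a != a'].

Definition Hnc (p : nat) : {set ZZ p} :=
  [set x : ZZ p | (p %| nat_of_ord x.1)%N && (p %| nat_of_ord x.2)%N].

Definition translate (p : nat) (A : {set ZZ p}) (h : ZZ p) : {set ZZ p} :=
  [set (a : ZZ p) + h | a : ZZ p in A].

Definition complements (p : nat) (A H : {set ZZ p}) : Prop :=
  (forall g : ZZ p, exists2 h, h \in H & g \in translate A h) /\
  (forall h h' : ZZ p, h \in H -> h' \in H -> h != h' ->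
      [disjoint translate A h & translate A h']).

(* Main.v *)
Require Import Defs.
From HB Require Import structures.
From mathcomp Require Import all_boot all_order all_algebra all_field.
From mathcomp Require Import all_classical all_reals all_analysis.
From mathcomp Require Import complex ring zify.
Import Order.TTheory GRing.Theory Num.Theory.
Local Open Scope ring_scope.
Lemma root_prod_ex (R : idomainType) (I : eqType) (s : seq I) (P : I -> {poly R}) x :
  root (\prod_(i <- s) P i) x -> exists2 i, i \in s & root (P i) x.
Proof.
elim: s => [|a s IH]; first by rewrite big_nil rootE hornerE oner_eq0.
rewrite big_cons rootM => /orP[h|/IH[i hi ri]]; first by exists a; rewrite ?inE ?eqxx.
by exists i; rewrite // inE hi orbT.
Qed.

Lemma root_prod_in (R : idomainType) (I : eqType) (s : seq I) (P : I -> {poly R}) x i :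
  i \in s -> root (P i) x -> root (\prod_(i <- s) P i) x.
Proof.
elim: s => [|a s IH]; first by [].
rewrite inE big_cons rootM => /orP[/eqP<- ->//|/IH h /h ->]; by rewrite orbT.
Qed.

Lemma phi_root (F : numFieldType) (n : nat) (z : F) :
  n.-primitive_root z -> root (map_poly intr 'Phi_n) z.
Proof.
move=> pz; have n0 := prim_order_gt0 pz.
have hX (d : nat) : map_poly (intr : int -> F) ('X^d - 1) = 'X^d - 1.
  by rewrite rmorphB rmorph1 /= map_polyXn.
have : root (map_poly (intr : int -> F) ('X^n - 1)) z.
  by rewrite hX // rootE !hornerE (prim_expr_order pz) subrr.
rewrite -prod_Cyclotomic // rmorph_prod /= => /root_prod_ex [d].
rewrite -dvdn_divisors // => dn rd.
have d0 : (0 < d)%N by apply: dvdn_gt0 dn.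
have : root (map_poly (intr : int -> F) ('X^d - 1)) z.
  rewrite -prod_Cyclotomic // rmorph_prod /=.
  by apply: (@root_prod_in _ _ _ _ _ d); rewrite // -dvdn_divisors.
rewrite hX // rootE !hornerE subr_eq0 -(prim_order_dvd pz) => nd.
have dn' : d = n by apply/eqP; rewrite eqn_dvd dn nd.
by rewrite -dn'.
Qed.

Lemma galois (F : numFieldType) n (w : F) (q : {poly rat}) :
  n.-primitive_root w -> root (map_poly ratr q) w ->
  forall k, coprime k n -> root (map_poly ratr q) (w ^+ k).
Proof.
move=> pw rq k ck.
have n0 := prim_order_gt0 pw.
pose Phi : {poly rat} := map_poly intr 'Phi_n.
have mapPhi (K : numFieldType) : map_poly (ratr : rat -> K) Phi = map_poly intr 'Phi_n.
  by rewrite /Phi -map_poly_comp; apply: eq_map_poly => b /=; rewrite rmorph_int.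
pose g := gcdp q Phi.
have rg : root (map_poly (ratr : rat -> F) g) w.
  by rewrite gcdp_map root_gcd rq mapPhi phi_root.
have Phi0 : Phi != 0.
  by rewrite map_poly_eq0_id0 ?(monicP (Cyclotomic_monic _)) ?oner_eq0 // monic_neq0 // Cyclotomic_monic.
have gs : size g != 1%N.
  apply/negP => /size_poly1P [c c0 gE].
  by move: rg; rewrite gE map_polyC rootC /= fmorph_eq0 (negbTE c0).
have gsC : size (map_poly (ratr : rat -> algC) g) != 1%N by rewrite size_map_poly.
have [z' rz'] := closed_rootP _ gsC.
have [z pz] := C_prim_root_exists n0.
have pz' : n.-primitive_root z'.
  rewrite -(root_cyclotomic pz) -(Cintr_Cyclotomic pz) -mapPhi.
  move: rz'; apply: contraTT => /negP nr; apply/negP => rr; apply: nr.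
  have /dvdpP [s ->] : g %| Phi by apply: dvdp_gcdr.
  by rewrite rmorphM rootM rr orbT.
have [pm [Epm _] Hpm] := minCpolyP z'.
have pmE : pm = Phi.
  have inj : injective (map_poly (ratr : rat -> algC)).
    by apply: map_inj_poly; [exact: fmorph_inj | exact: rmorph0].
  apply: inj; transitivity (minCpoly z'); first by rewrite Epm.
  by rewrite (minCpoly_cyclotomic pz') -(Cintr_Cyclotomic pz') mapPhi.
have dPhi : Phi %| q.
  have : pm %| g by rewrite -Hpm.
  by rewrite pmE => h; apply: dvdp_trans h (dvdp_gcdl q Phi).
have /dvdpP [s ->] := dPhi.
rewrite rmorphM rootM; apply/orP; right.
have := @phi_root F n (w ^+ k); rewrite (prim_root_exp_coprime k pw) ck -mapPhi.
by apply.
Qed.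
Lemma expiS (R : realType) n k : expi R n k.+1 = expi R n k * expi R n 1.
Proof.
rewrite /expi.
have -> : 2 * pi * k.+1%:R / n%:R = 2 * pi * k%:R / n%:R + 2 * pi * 1%:R / n%:R :> R.
  by rewrite -mulrDl -mulrDr -natrD addn1.
rewrite cosD sinD.
by apply/eqP; rewrite eq_complex /= eqxx addrC eqxx.
Qed.

Lemma expiX (R : realType) n k : expi R n k = expi R n 1 ^+ k.
Proof.
elim: k => [|k IH]; last by rewrite expiS IH exprSr.
rewrite /expi mulr0 mul0r cos0 sin0 expr0.
by apply/eqP; rewrite eq_complex /= !eqxx.
Qed.

Lemma expin (R : realType) n : (0 < n)%N -> expi R n n = 1.
Proof.
move=> n0; rewrite /expi mulfK ?pnatr_eq0 -?lt0n //.
have -> : 2 * pi = pi *+ 2 :> R by rewrite mulr_natl.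
by rewrite cos2pi sin2pi; apply/eqP; rewrite eq_complex /= !eqxx.
Qed.

Lemma cos_ne1 (R : realType) (x : R) : 0 < x < pi *+ 2 -> cos x != 1.
Proof.
move=> /andP[x0 x2].
have cinj := @cos_inj R.
have hpi : 0 <= pi :> R by apply: pi_ge0.
case: (lerP x pi) => xpi.
  apply/eqP => c1.
  have : x = 0.
    apply: cinj; rewrite ?in_itv /= ?lexx ?hpi ?(ltW x0) ?xpi //.
    by rewrite c1 cos0.
  by move=> e; move: x0; rewrite e ltxx.
have -> : cos x = cos (pi *+ 2 - x).
  by rewrite -[RHS]cosN opprB -(cosD2pi (x - pi *+ 2)) subrK.
apply/eqP => c1.
have : pi *+ 2 - x = 0.
  apply: cinj; rewrite ?in_itv /= ?lexx ?hpi //.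
    by rewrite subr_ge0 ltW // ; rewrite lerBlDr mulr2n lerD2l ltW.
  by rewrite c1 cos0.
by move/eqP; rewrite subr_eq0 => /eqP e; move: x2; rewrite e ltxx.
Qed.

Lemma expi_prim (R : realType) n : (0 < n)%N -> n.-primitive_root (expi R n 1).
Proof.
move=> n0; apply/andP; split => //; apply/forallP => i.
rewrite unity_rootE -expiX.
have [e|ne] := eqVneq i.+1 n; first by rewrite e expin // !eqxx.
rewrite eqbF_neg; apply/negP => /eqP /eqP.
rewrite /expi eq_complex /= => /andP[/eqP c1 _].
have hi : (i.+1 < n)%N by rewrite ltn_neqAle ne ltn_ord.
have n0' : 0 < n%:R :> R by rewrite ltr0n.
move: c1; apply/eqP; apply: cos_ne1; apply/andP; split.
  by rewrite divr_gt0 // mulr_gt0 ?ltr0n // mulr_gt0 // pi_gt0.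
rewrite ltr_pdivrMr // (_ : pi *+ 2 = 2 * pi); last by rewrite mulr_natl.
rewrite ltr_pM2l ?ltr_nat //.
by rewrite mulr_gt0 // pi_gt0.
Qed.

Section ValLemmas.
Lemma ZpN (p : nat) : (1 < p)%N -> (Zp_trunc (p ^ 2)).+2 = (p ^ 2)%N.
Proof. by move=> p1; apply: Zp_cast; rewrite (ltn_exp2l 0) // ltnW. Qed.
End ValLemmas.

Lemma valD (p : nat) (x y : 'Z_(p ^ 2)) : (1 < p)%N ->
  nat_of_ord (x + y) = ((nat_of_ord x + nat_of_ord y) %% p ^ 2)%N.
Proof.
move=> p1; change (nat_of_ord (x + y)) with ((nat_of_ord x + nat_of_ord y) %% (Zp_trunc (p ^ 2)).+2)%N.
by congr (_ %% _)%N; exact: ZpN.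
Qed.

Lemma valM (p : nat) (x y : 'Z_(p ^ 2)) : (1 < p)%N ->
  nat_of_ord (x * y) = ((nat_of_ord x * nat_of_ord y) %% p ^ 2)%N.
Proof.
move=> p1; change (nat_of_ord (x * y)) with ((nat_of_ord x * nat_of_ord y) %% (Zp_trunc (p ^ 2)).+2)%N.
by congr (_ %% _)%N; exact: ZpN.
Qed.

Lemma valN (p : nat) (x : 'Z_(p ^ 2)) : (1 < p)%N ->
  nat_of_ord (- x) = ((p ^ 2 - nat_of_ord x) %% p ^ 2)%N.
Proof.
move=> p1; change (nat_of_ord (- x)) with (((Zp_trunc (p ^ 2)).+2 - nat_of_ord x) %% (Zp_trunc (p ^ 2)).+2)%N.
have E := (@ZpN p p1); congr (_ %% _)%N; first congr (_ - _)%N; exact: E.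
Qed.

Lemma vlt (p : nat) (x : 'Z_(p ^ 2)) : (1 < p)%N -> (nat_of_ord x < p ^ 2)%N.
Proof. by move=> p1; apply: leq_trans (ltn_ord x) _; rewrite ZpN. Qed.

Lemma dvd_modN (p m : nat) : (p %| m %% p ^ 2)%N = (p %| m)%N.
Proof. by rewrite /dvdn modn_dvdm // dvdn_exp. Qed.

Lemma dvd_valMl (p : nat) (x y : 'Z_(p ^ 2)) : (1 < p)%N ->
  (p %| nat_of_ord x)%N -> (p %| nat_of_ord (x * y)%R)%N.
Proof. by move=> p1 h; rewrite valM // dvd_modN dvdn_mulr. Qed.

Lemma dvd_valN (p : nat) (x : 'Z_(p ^ 2)) : (1 < p)%N ->
  (p %| nat_of_ord x)%N -> (p %| nat_of_ord (- x)%R)%N.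
Proof. by move=> p1 h; rewrite valN // dvd_modN dvdn_sub // dvdn_exp. Qed.

Lemma dvd_valD (p : nat) (x y : 'Z_(p ^ 2)) : (1 < p)%N ->
  (p %| nat_of_ord x)%N -> (p %| nat_of_ord y)%N -> (p %| nat_of_ord (x + y)%R)%N.
Proof. by move=> p1 hx hy; rewrite valD // dvd_modN dvdn_add. Qed.

Lemma dvd_valB (p : nat) (x y : 'Z_(p ^ 2)) : (1 < p)%N ->
  (p %| nat_of_ord x)%N -> (p %| nat_of_ord y)%N -> (p %| nat_of_ord (x - y)%R)%N.
Proof. by move=> p1 hx hy; rewrite dvd_valD // dvd_valN. Qed.

Lemma dvd_valBr (p : nat) (x y : 'Z_(p ^ 2)) : (1 < p)%N ->
  (p %| nat_of_ord x)%N -> (p %| nat_of_ord (x + y)%R)%N -> (p %| nat_of_ord y)%N.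
Proof.
move=> p1 hx hxy; have -> : y = (x + y) - x by rewrite [x + y]addrC addrK.
exact: dvd_valB.
Qed.

Lemma dvd_sub_mod (p : nat) (x y : 'Z_(p ^ 2)) : (1 < p)%N ->
  (x %% p = y %% p)%N -> (p %| nat_of_ord (x - y)%R)%N.
Proof.
move=> p1 h.
have := @valD p y (x - y) p1; rewrite [(y + _)%R]addrC subrK => hx.
have : (y + (x - y)%R == y + 0 %[mod p])%N.
  by rewrite addn0 -h hx modn_dvdm // dvdn_exp.
by rewrite eqn_modDl mod0n.
Qed.

Lemma nat_aux (m n N : nat) : (0 < N -> m < N -> n < N -> N %| m + (N - n) -> m = n)%N.
Proof.
move=> h1 h2 h3 /dvdnP [t ht].
have : t = 1%N by nia.
by move=> t1; subst t; lia.
Qed.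

Theorem mainTheorem3 (R : realType) (p : nat) (A : {set ZZ p}) :
  prime p -> complements A (Hnc p) ->
  diff_set A :&: zero_set (fourier_sym R A) = finset.set0.
Proof.
move=> pp [cov disj].
have p1 : (1 < p)%N := prime_gt1 pp.
have p0 : (0 < p)%N := prime_gt0 pp.
have N0 : (0 < p ^ 2)%N by rewrite expn_gt0 p0.
apply/setP => xi; rewrite finset.in_setI finset.in_set0; apply/negP => /andP[hd hz].
move: hd => /imset2P[a0 a1 a0A]; rewrite inE => /andP[a1A na] xiE.
pose w := expi R (p ^ 2) 1.
have pw : (p ^ 2).-primitive_root w := @expi_prim R _ N0.
pose e (a : ZZ p) : nat := nat_of_ord (symp a xi).
pose G (k : nat) : R[i] := \sum_(a in A) w ^+ (k * e a).
have F0 : G 1%N = 0.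
  move: hz; rewrite /zero_set inE /fourier_sym => /eqP <-.
  by apply: eq_bigr => a _; rewrite mul1n expiX.
have H0 : (0 : ZZ p) \in Hnc p by rewrite inE /= dvdn0.
have xiH : xi \notin Hnc p.
  apply/negP => xH.
  have nx : (0 : ZZ p) != xi by rewrite eq_sym xiE subr_eq0.
  have m1 : a0 \in translate A 0 by apply/imsetP; exists a0; rewrite ?addr0.
  have m2 : a0 \in translate A xi.
    by apply/imsetP; exists a1; rewrite // xiE addrC subrK.
  by move: (disjointFr (disj _ _ H0 xH nx) m1); rewrite m2.
have hdec : forall f : ZZ p -> R[i],
    \sum_g f g = \sum_(a in A) \sum_(h in Hnc p) f (a + h).
  move=> f.
  pose sm := fun x : ZZ p * ZZ p => x.1 + x.2.
  have inj : {in finset.setX A (Hnc p) &, injective sm}.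
    move=> [a h] [a' h'] /setXP[aA hH] /setXP[aA' hH']; rewrite /sm /= => E.
    have [ehh|nhh] := eqVneq h h'.
      by rewrite -ehh in E *; rewrite (addIr h E).
    have m1 : a + h \in translate A h by apply/imsetP; exists a.
    have m2 : a + h \in translate A h' by apply/imsetP; exists a'.
    by move: (disjointFr (disj _ _ hH hH' nhh) m1); rewrite m2.
  have im : sm @: finset.setX A (Hnc p) = [set: ZZ p].
    apply/setP => g; rewrite inE; have [h hH] := cov g.
    case/imsetP => a aA ->; apply/imsetP; exists (a, h) => //.
    by rewrite inE /= aA hH.
  transitivity (\sum_(g in [set: ZZ p]) f g).
    by apply: eq_bigl => g; rewrite inE.
  rewrite -im big_imset //= pair_big /=.
  by apply: eq_bigl => -[a h]; rewrite inE.
have hG1 : forall k, coprime k (p ^ 2) -> G k = 0.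
  move=> k ck.
  pose q : {poly rat} := \sum_(a in A) 'X^(e a).
  have mq : map_poly (ratr : rat -> R[i]) q = \sum_(a in A) 'X^(e a).
    by rewrite raddf_sum; apply: eq_bigr => a _; exact: map_polyXn.
  have rq : root (map_poly (ratr : rat -> R[i]) q) w.
    rewrite mq rootE horner_sum; apply/eqP; rewrite -[RHS]F0 /G; apply: eq_bigr => a _.
    by rewrite hornerXn mul1n.
  have := @galois _ _ _ _ pw rq _ ck.
  rewrite mq rootE horner_sum => /eqP <-; rewrite /G; apply: eq_bigr => a _.
  by rewrite hornerXn -exprM.
have hG2 : forall k, (0 < k < p ^ 2)%N -> (p %| k)%N -> G k = 0.
  move=> k /andP[k0 kN] pk.
  pose chi (x : 'Z_(p ^ 2)) : R[i] := w ^+ (k * x).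
  have chiD : forall x y, chi (x + y) = chi x * chi y.
    move=> x y; rewrite /chi -exprD; apply/eqP; rewrite (eq_prim_root_expr pw).
    by rewrite valD // modnMmr mulnDr.
  have chi1 : forall x : 'Z_(p ^ 2), (p %| x)%N -> chi x = 1.
    move=> x px; rewrite /chi; apply/eqP; rewrite -(prim_order_dvd pw).
    by apply: (@dvdn_trans (p * p)); [rewrite mulnn | exact: dvdn_mul].
  have chiH : forall a h, h \in Hnc p -> chi (symp (a + h) xi) = chi (symp a xi).
    move=> a h; rewrite inE => /andP[h1 h2].
    have -> : symp (a + h) xi = symp a xi + symp h xi by rewrite /symp /=; ring.
    rewrite chiD (chi1 (symp h xi)) ?mulr1 // /symp.
    by apply: (@dvd_valB p _ _ p1); apply: (@dvd_valMl p _ _ p1).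
  have chiS : forall c : 'Z_(p ^ 2), ~~ (p %| c)%N -> \sum_(x : 'Z_(p ^ 2)) chi (x * c) = 0.
    move=> c pc.
    have c1 : chi c != 1.
      rewrite /chi -(prim_order_dvd pw); apply/negP => hd.
      have : (p ^ 2 %| k)%N.
        by rewrite -(@Gauss_dvdl _ _ c) // coprime_pexpl // prime_coprime.
      by move/dvdn_leq => /(_ k0); rewrite leqNgt kN.
    set S := \sum_x chi (x * c).
    have : S = S * chi c.
      rewrite /S [LHS](reindex_inj (addIr 1)) /= mulr_suml; apply: eq_bigr => x _.
      by rewrite mulrDl mul1r chiD.
    move/eqP; rewrite -subr_eq0 -{1}(mulr1 S) -mulrBr mulf_eq0 subr_eq0 eq_sym.
    by case/orP => [/eqP <- //|]; rewrite eq_sym (negbTE c1).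
  have tot : \sum_(g : ZZ p) chi (symp g xi) = 0.
    rewrite -(pair_bigA _ (fun g1 g2 => chi (symp (g1, g2) xi))) /=.
    have E : forall g1 g2, symp (g1, g2) xi = g1 * xi.2 + g2 * - xi.1.
      by move=> g1 g2; rewrite /symp /=; ring.
    under eq_bigr => g1 _ do under eq_bigr => g2 _ do rewrite E chiD.
    under eq_bigr => g1 _ do rewrite -mulr_sumr.
    rewrite -mulr_suml.
    move: xiH; rewrite inE negb_and => /orP[hx1|hx2].
      rewrite (chiS (- xi.1)) ?mulr0 //; apply: contra hx1 => hh.
      by rewrite -(opprK xi.1); apply: (@dvd_valN p _ p1).
    by rewrite chiS ?mul0r.
  have : G k *+ #|Hnc p| = 0.
    rewrite -tot hdec /G -sumrMnl; apply: eq_bigr => b _.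
    rewrite (eq_bigr (fun _ => chi (symp b xi))) ?sumr_const //.
    by move=> hb hbH; exact: chiH.
  move/eqP; rewrite mulrn_eq0 => /orP[|/eqP //].
  have : (0 < #|Hnc p|)%N by apply/card_gt0P; exists 0.
  by case: #|Hnc p|.
have hG : forall k, (0 < k < p ^ 2)%N -> G k = 0.
  move=> k hk; have [ck|ck] := boolP (coprime k (p ^ 2)); first exact: hG1.
  apply: hG2 => //; move: ck.
  by rewrite coprime_pexpr // coprime_sym prime_coprime // negbK.
pose j0 := e a0.
have ej : e a1 = j0.
  have E1 : (a0 - a1).1 = a0.1 - a1.1 by [].
  have E2 : (a0 - a1).2 = a0.2 - a1.2 by [].
  rewrite /e /j0; have -> : symp a1 xi = symp a0 xi by rewrite /symp xiE E1 E2; ring.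
  by [].
have eN : forall a, (e a < p ^ 2)%N by move=> a; exact: vlt.
pose S := \sum_(k < p ^ 2) G k * w ^+ (k * (p ^ 2 - j0)).
have S1 : S = #|A|%:R.
  rewrite /S (bigD1 (Ordinal N0)) //= big1 ?addr0.
    rewrite mul0n expr0 mulr1 /G.
    by under eq_bigr do rewrite mul0n expr0; rewrite sumr_const.
  move=> i ni; rewrite hG ?mul0r // ltn_ord andbT lt0n.
  by apply: contra ni => /eqP i0; apply/eqP; apply: val_inj => /=; rewrite i0.
have S2 : S = (p ^ 2)%:R *+ #|[set a in A | e a == j0]|.
  rewrite /S /G; under eq_bigr do rewrite mulr_suml; rewrite exchange_big /=.
  transitivity (\sum_(a in A) (if e a == j0 then (p ^ 2)%:R else 0 : R[i])).
    apply: eq_bigr => a _.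
    transitivity (\sum_(k < p ^ 2) (w ^+ (e a + (p ^ 2 - j0))) ^+ k).
      by apply: eq_bigr => k _; rewrite -exprD -mulnDr mulnC exprM.
    case: eqP => [ea|ne].
      rewrite ea subnKC ?(ltnW (eN a0)) // (prim_expr_order pw).
      by under eq_bigr do rewrite expr1n; rewrite sumr_const card_ord.
    set u := w ^+ (e a + (p ^ 2 - j0)).
    have u1 : u != 1.
      rewrite /u -(prim_order_dvd pw); apply/negP => hd; apply: ne.
      exact: (nat_aux _ _ _ N0 (eN a) (eN a0) hd).
    have : (u - 1) * (\sum_(k < p ^ 2) u ^+ k) = 0.
      by rewrite -subrX1 /u -exprM mulnC exprM (prim_expr_order pw) expr1n subrr.
    by move/eqP; rewrite mulf_eq0 subr_eq0 (negbTE u1) /= => /eqP.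
  rewrite -big_mkcondr sumr_const; congr (_ *+ _).
  by apply: eq_card => a; rewrite !inE.
have c2 : (1 < #|[set a in A | e a == j0]|)%N.
  apply/card_gt1P; exists a0, a1; split => //; rewrite inE ?a0A ?a1A ?ej eqxx //.
have cA : (#|A| <= p ^ 2)%N.
  pose red (a : ZZ p) : 'I_p * 'I_p :=
    (Ordinal (ltn_pmod a.1 p0), Ordinal (ltn_pmod a.2 p0)).
  have injr : {in A &, injective red}.
    move=> a a' aA aA' E.
    have r1 : (a.1 %% p = a'.1 %% p)%N by exact: (congr1 (fun z => nat_of_ord z.1) E).
    have r2 : (a.2 %% p = a'.2 %% p)%N by exact: (congr1 (fun z => nat_of_ord z.2) E).
    apply/eqP; apply/negPn/negP => na'.
    pose d := a - a'.
    have dH : d \in Hnc p.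
      rewrite inE; apply/andP; split; exact: dvd_sub_mod.
    have nd : (0 : ZZ p) != d by rewrite eq_sym subr_eq0.
    have m1 : a \in translate A 0 by apply/imsetP; exists a; rewrite ?addr0.
    have m2 : a \in translate A d.
      by apply/imsetP; exists a'; rewrite // /d addrC subrK.
    by move: (disjointFr (disj _ _ H0 dH nd) m1); rewrite m2.
  rewrite -(card_in_imset injr); apply: leq_trans (max_card _) _.
  by rewrite card_prod !card_ord mulnn.
have : (#|A| = p ^ 2 * #|[set a in A | e a == j0]|)%N.
  apply/eqP; rewrite -(@eqr_nat R[i]) -S1 S2 natrM mulr_natr //.
set c := #|[set a in A | e a == j0]| in c2 *.
move=> hc; move: cA; rewrite hc -[X in (_ <= X)%N](muln1 (p ^ 2)%N) leq_pmul2l //.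
by rewrite leqNgt c2.
Qed.
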